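(* Let $\mathcal{S}$ be the STAIR code with inside global parity symbols as defined in the context. Then: (a) the map sending $X\in\mathcal{S}$ to its entries at the data positions is a bijection from $\mathcal{S}$ onto $\mathbb{F}^{r(n-m)-s}$; that is, for every assignment of data symbols to the data positions there is exactly one array in $\mathcal{S}$ with those data symbols (so the inside global parity symbols and row parity symbols are uniquely determined, and in particular upstairs and downstairs encoding yield the same values); (b) $\mathcal{S}$ tolerates the following failures: let $F\subseteq\{0,\dots,n-1\}$ with $|F|\le m$, and for each $j\notin F$ let $L_j\subseteq\{0,\dots,r-1\}$, such that the number $t$ of $j\notin F$ with $L_j\ne\emptyset$ satisfies $t\le m'$ and the sorted nonzero sizes $f_0\le\cdots\le f_{t-1}$ of these $L_j$ satisfy $f_{t-1-i}\le e_{m'-1-i}$ for $0\le i\le t-1$. Then every $X\in\mathcal{S}$ is uniquely determined within $\mathcal{S}$ by its entries $X_{i,j}$ with $j\notin F$ and $i\notin L_j$.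
   Context: Parameters: integers $n,r,m,m'$ with $1\le m<n$, $1\le m'\le n-m$, and $\mathbf{e}=(e_0,\dots,e_{m'-1})$ with $0<e_0\le\cdots\le e_{m'-1}\le r$; $s=\sum_l e_l$. Field $\mathbb{F}=GF(2^w)$ with $n+m'\le 2^w$, $r+e_{m'-1}\le 2^w$. An $(\eta,\kappa)$-code is a linear MDS code of length $\eta$ and dimension $\kappa$ (any $\kappa$ coordinates determine the codeword); systematic means a codeword is the $\kappa$ input symbols followed by $\eta-\kappa$ parity symbols. $\mathcal{C}_{row}$ is a systematic $(n+m',n-m)$-code and $\mathcal{C}_{col}$ a systematic $(r+e_{m'-1},r)$-code over $\mathbb{F}$. Stair positions: $T=\{(i,\,n-m-m'+l): 0\le l\le m'-1,\ r-e_l\le i\le r-1\}$ (inside global parity symbol $\hat g_{h,l}$ sits at row $r-e_l+h$ of column $n-m-m'+l$). Data positions: all $(i,j)$ with $0\le i\le r-1$, $0\le j\le n-m-1$, $(i,j)\notin T$; there are $r(n-m)-s$ of them. Columns $n-m,\dots,n-1$ hold row parity symbols. $\mathcal{S}$ is the set of $r\times n$ arrays $X$ over $\mathbb{F}$ for which there exists an $r\times m'$ array $P'$ such that (i) for each row $i$, the vector $(X_{i,0},\dots,X_{i,n-1},P'_{i,0},\dots,P'_{i,m'-1})$ is a codeword of $\mathcal{C}_{row}$ (i.e., it is the $\mathcal{C}_{row}$-encoding of $(X_{i,0},\dots,X_{i,n-m-1})$); and (ii) for each $l$, encoding column $(P'_{0,l},\dots,P'_{r-1,l})$ with $\mathcal{C}_{col}$,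 the first $e_l$ of its $e_{m'-1}$ parity symbols are zero (the outside global parity symbols are fixed to zero). *)

(* Defs.v *)
From HB Require Import structures.
From mathcomp Require Import all_boot all_order all_algebra.
Set Implicit Arguments. Unset Strict Implicit. Unset Printing Implicit Defensive.
Import GRing.Theory.
Local Open Scope ring_scope.

Definition codeword (F : fieldType) (kappa eta : nat) (G : 'M[F]_(kappa, eta))
  (c : 'rV[F]_eta) : Prop := exists u : 'rV[F]_kappa, c = u *m G.

Definition systematic (F : fieldType) (kappa eta : nat) (G : 'M[F]_(kappa, eta))
  : Prop :=
  (kappa <= eta)%N /\
  forall (i : 'I_kappa) (j : 'I_eta), (j < kappa)%N ->
    G i j = (i == j :> nat)%:R.

Definition MDS (F : fieldType) (kappa eta : nat) (G : 'M[F]_(kappa, eta)) : Prop :=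
  forall c c' : 'rV[F]_eta, codeword G c -> codeword G c' ->
  forall S : {set 'I_eta}, #|S| = kappa ->
  (forall j, j \in S -> c 0 j = c' 0 j) -> c = c'.

Definition sys_MDS_code (F : fieldType) (kappa eta : nat) (G : 'M[F]_(kappa, eta))
  : Prop := systematic G /\ MDS G.

Definition stair_pos (n r m m' : nat) (e : nat -> nat) (i j : nat) : bool :=
  [exists l : 'I_m', (j == n - m - m' + l)%N && (r - e l <= i < r)%N].

Definition data_pos (n r m m' : nat) (e : nat -> nat) (i j : nat) : bool :=
  [&& (i < r)%N, (j < n - m)%N & ~~ stair_pos n r m m' e i j].

Arguments codeword : clear implicits.
Definition in_STAIR (F : fieldType) (n r m m' : nat) (e : nat -> nat)
  (Grow : 'M[F]_(n - m, n + m')) (Gcol : 'M[F]_(r, r + e m'.-1))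
  (X : 'M[F]_(r, n)) : Prop :=
  exists P' : 'M[F]_(r, m'),
    (forall i : 'I_r, codeword F (n - m) (n + m') Grow (row_mx (row i X) (row i P'))) /\
    (forall (l : 'I_m') (h : 'I_(e m'.-1)), (h < e l)%N ->
       (((col l P')^T *m Gcol) 0 (rshift r h) = 0)).

Definition fail_sizes (n r : nat) (Fs : {set 'I_n}) (L : 'I_n -> {set 'I_r})
  : seq nat :=
  sort leq [seq #|L j| | j <- enum 'I_n & (j \notin Fs) && (L j != set0)].
Arguments in_STAIR F n r m m' e Grow Gcol X : clear implicits.

(* Main.v *)
Require Import Defs.
From HB Require Import structures.
From mathcomp Require Import all_boot all_order all_algebra.
From mathcomp Require Import zify.
Import GRing.Theory.

Module S_H1.
Set Implicit Arguments. Unset Strict Implicit. Unset Printing Implicit Defensive.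
Local Open Scope ring_scope.

Lemma card_lt_ord (N k : nat) : (k <= N)%N -> #|[set i : 'I_N | (i < k)%N]| = k.
Proof.
move=> kN.
have -> : [set i : 'I_N | (i < k)%N] = widen_ord kN @: [set: 'I_k].
  apply/setP=> i; rewrite inE; apply/idP/imsetP => [ik|[j _ ->]]; last by rewrite /= ltn_ord.
  by exists (Ordinal ik) => //; apply/val_inj.
rewrite card_imset ?cardsT ?card_ord //.
by move=> x y /(congr1 val) /= /val_inj.
Qed.

Lemma card_ge_ord (N k : nat) : (k <= N)%N -> #|[set i : 'I_N | (k <= i)%N]| = (N - k)%N.
Proof.
move=> kN.
have := cardsC [set i : 'I_N | (i < k)%N]; rewrite card_lt_ord // card_ord.
have -> : ~: [set i : 'I_N | (i < k)%N] = [set i : 'I_N | (k <= i)%N].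
  by apply/setP=> i; rewrite !inE -leqNgt.
lia.
Qed.

Lemma sub_card_set (T : finType) (A : {set T}) k :
  (k <= #|A|)%N -> exists B : {set T}, B \subset A /\ #|B| = k.
Proof.
move/card_geqP=> [s [us ss sA]].
exists [set x in s]; split.
  by apply/subsetP=> x; rewrite inE => /sA.
by rewrite cardsE (card_uniqP us).
Qed.

Lemma sorted_count_nth (h : nat) (s : seq nat) :
  sorted leq s -> (0 < count (fun x => h < x) s)%N ->
  (h < nth 0 s (size s - count (fun x => h < x) s))%N.
Proof.
elim: s => [//|x s IH] /= Hs.
have Hs' : sorted leq s by move: Hs; case: s {IH} => //= y s /andP[].
have Hall : all (leq x) s by apply: (order_path_min leq_trans Hs).
case: (ltnP h x) => hx.
  have -> : count (fun x0 => (h < x0)%N) s = size s.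
    apply/eqP; rewrite -all_count; apply/allP => y ys.
    by have := allP Hall y ys; lia.
  by rewrite add1n subnn.
rewrite add0n => Hc.
move: Hc; set c := count _ s => Hc.
have cs : (c <= size s)%N by apply: count_size.
have -> : ((size s).+1 - c = (size s - c).+1)%N by lia.
by apply: IH.
Qed.

End S_H1.
Import S_H1.

Module S_H2.
Set Implicit Arguments. Unset Strict Implicit. Unset Printing Implicit Defensive.
Local Open Scope ring_scope.

Section Codes.
Variables (F : fieldType) (k eta : nat) (G : 'M[F]_(k, eta)).

Lemma cw0 : codeword F k eta G 0.
Proof. by exists 0; rewrite mul0mx. Qed.

Lemma cwD c d : codeword F k eta G c -> codeword F k eta G d -> codeword F k eta G (c + d).
Proof. by move=> [u ->] [v ->]; exists (u + v); rewrite mulmxDl. Qed.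

Lemma cwN c : codeword F k eta G c -> codeword F k eta G (- c).
Proof. by move=> [u ->]; exists (- u); rewrite mulNmx. Qed.

Lemma cwB c d : codeword F k eta G c -> codeword F k eta G d -> codeword F k eta G (c - d).
Proof. by move=> ? ?; apply: cwD => //; apply: cwN. Qed.

Lemma cwZ a c : codeword F k eta G c -> codeword F k eta G (a *: c).
Proof. by move=> [u ->]; exists (a *: u); rewrite scalemxAl. Qed.

Lemma cw_sum (I : finType) (a : I -> F) (c : I -> 'rV_eta) :
  (forall i, codeword F k eta G (c i)) -> codeword F k eta G (\sum_i a i *: c i).
Proof.
move=> H; apply: (big_ind (codeword F k eta G)) => //; first exact: cw0.
  by move=> ? ?; apply: cwD.
by move=> i _; apply: cwZ.
Qed.

Lemma sys_entry (u : 'rV_k) (j : 'I_eta) (j' : 'I_k) :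
  systematic G -> j = j' :> nat -> (u *m G) 0 j = u 0 j'.
Proof.
move=> [_ HG] jj; rewrite mxE (bigD1 j') //= big1 => [|i ij].
  rewrite HG ?jj // eqxx mulr1 addr0 //.
rewrite HG ?jj //; move: ij; rewrite -(inj_eq val_inj) /= => /negbTE ->.
by rewrite mulr0.
Qed.

Lemma mds_zero (c : 'rV_eta) (A : {set 'I_eta}) :
  MDS G -> codeword F k eta G c -> (k <= #|A|)%N ->
  (forall j, j \in A -> c 0 j = 0) -> c = 0.
Proof.
move=> HM Hc kA HA.
have [B [BA cB]] : exists B : {set 'I_eta}, B \subset A /\ #|B| = k.
  move/card_geqP: kA => [s [us ss sA]].
  exists [set x in s]; split; first by apply/subsetP=> x; rewrite inE => /sA.
  by rewrite cardsE (card_uniqP us).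
apply: (HM c 0 Hc cw0 B cB) => j jB.
by rewrite mxE HA //; apply: (subsetP BA).
Qed.
End Codes.

End S_H2.
Import S_H2.

Module S_H3.
Set Implicit Arguments. Unset Strict Implicit. Unset Printing Implicit Defensive.
Local Open Scope ring_scope.

Lemma card_shiftU (a b : nat) (A : {set 'I_a}) (B : {set 'I_b}) :
  #|(@lshift a b @: A) :|: (@rshift a b @: B)| = (#|A| + #|B|)%N.
Proof.
rewrite cardsU !card_imset; [|exact: rshift_inj|exact: lshift_inj].
suff -> : (@lshift a b @: A) :&: (@rshift a b @: B) = set0 by rewrite cards0 subn0.
apply/setP=> x; rewrite !inE; apply/negbTE/negP => /andP[/imsetP[y _ ->] /imsetP[z _]].
move/(congr1 val) => /=; have := ltn_ord y; lia.
Qed.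

Lemma card_split_ge (T : finType) (A : {set T}) (P : pred T) :
  (#|[set x in A | P x]| + #|[set x in A | ~~ P x]| = #|A|)%N.
Proof.
rewrite -(cardsID [set x | P x] A).
have -> : [set x in A | P x] = A :&: [set x | P x] by apply/setP=> x; rewrite !inE.
have -> : [set x in A | ~~ P x] = A :\: [set x | P x] by apply/setP=> x; rewrite !inE andbC.
by [].
Qed.

End S_H3.
Import S_H3.

Module S_Core.
Set Implicit Arguments. Unset Strict Implicit. Unset Printing Implicit Defensive.
Local Open Scope ring_scope.

Lemma arith1 (a b c f fc n m : nat) : (a <= c)%N -> (f + fc = n)%N -> (a + b = fc)%N -> (f <= m)%N -> (n - m <= b + c)%N.
Proof. lia. Qed.

Lemma arith2 (f fc n m : nat) : (f + fc = n)%N -> (f <= m)%N -> (n - m <= fc)%N.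
Proof. lia. Qed.

Section Core.
Variables (F : fieldType) (n r m m' : nat) (e : nat -> nat).
Variables (Grow : 'M[F]_(n - m, n + m')) (Gcol : 'M[F]_(r, r + e m'.-1)).
Hypotheses (Hrow : sys_MDS_code Grow) (Hcol : sys_MDS_code Gcol).
Hypothesis (Hmn : (m <= n)%N).
Hypothesis (Hemax : forall l : 'I_m', (e l <= e m'.-1)%N).

Local Notation E := (e m'.-1).

Lemma core (Z : 'M[F]_(r,n)) (P : 'M[F]_(r,m')) (Fs : {set 'I_n}) (L : 'I_n -> {set 'I_r}) :
 (forall i : 'I_r, codeword F (n-m) (n+m') Grow (row_mx (row i Z) (row i P))) ->
 (forall (l : 'I_m') (h : 'I_E), (h < e l)%N -> ((col l P)^T *m Gcol) 0 (rshift r h) = 0) ->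
 (#|Fs| <= m)%N ->
 (forall h : nat, #|[set j | (j \notin Fs) && (h < #|L j|)%N]| <= #|[set l : 'I_m' | (h < e l)%N]|)%N ->
 (forall i j, j \notin Fs -> i \notin L j -> Z i j = 0) ->
 Z = 0.
Proof.
move=> Hr Hc HFs Hcnt Z0.
set ext := fun i => row_mx (row i Z) (row i P).
set V := fun h : 'I_E => \sum_i Gcol i (rshift r h) *: ext i.
have cV : forall h, codeword F (n-m) (n+m') Grow (V h) by move=> h; apply: cw_sum.
set c := fun j : 'I_n => (col j Z)^T *m Gcol.
have cc : forall j, codeword F r (r + E) Gcol (c j) by move=> j; exists (col j Z)^T.
have cE : forall j i, c j 0 (lshift E i) = Z i j.
  by move=> j i; rewrite /c (@sys_entry _ _ _ _ _ _ i Hcol.1) // !mxE.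
have VL : forall h j, V h 0 (lshift m' j) = c j 0 (rshift r h).
  move=> h j; rewrite /V summxE [in RHS]mxE; apply: eq_bigr => i _.
  by rewrite [in LHS]mxE /ext row_mxEl !mxE mulrC.
have VR : forall h l, V h 0 (rshift n l) = ((col l P)^T *m Gcol) 0 (rshift r h).
  move=> h l; rewrite /V summxE [in RHS]mxE; apply: eq_bigr => i _.
  by rewrite [in LHS]mxE /ext row_mxEr !mxE mulrC.
have colz : forall j, (forall i, Z i j = 0) -> c j = 0.
  move=> j Hj; rewrite /c; have -> : col j Z = 0 by apply/matrixP=> i k; rewrite !mxE Hj.
  by rewrite trmx0 mul0mx.
have key : forall h, (h <= E)%N ->
   (forall h' : 'I_E, (h' < h)%N -> V h' = 0) /\
   (forall j, j \notin Fs -> (#|L j| <= h)%N -> forall i, Z i j = 0).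
  elim=> [_|h IH hE].
    split=> // j jF; rewrite leqn0 cards_eq0 => /eqP L0 i; apply: Z0 => //; by rewrite L0 inE.
  have [IHV IHZ] := IH (ltnW hE).
  pose hh : 'I_E := Ordinal hE.
  have Vh : V hh = 0.
    apply: (mds_zero (A := (@lshift n m' @: [set j | (j \notin Fs) && (#|L j| <= h)%N]) :|:
                           (@rshift n m' @: [set l : 'I_m' | (h < e l)%N]))) => //.

    - exact: Hrow.2.
    - rewrite card_shiftU.
      have := card_split_ge (~: Fs) (fun j => (h < #|L j|)%N).
      have := cardsC Fs; rewrite card_ord.
      have -> : [set x in ~: Fs | (h < #|L x|)%N] = [set j | (j \notin Fs) && (h < #|L j|)%N].
        by apply/setP=> x; rewrite !inE.
      have -> : [set x in ~: Fs | ~~ (h < #|L x|)%N] = [set j | (j \notin Fs) && (#|L j| <= h)%N].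
        by apply/setP=> x; rewrite !inE -leqNgt.
      move=> H2 H3; exact: (arith1 (Hcnt h) H2 H3 HFs).
    - move=> x; rewrite inE => /orP[/imsetP[j]|/imsetP[l]]; rewrite inE.
      + move=> /andP[jF Lj] ->; rewrite VL colz ?mxE //; exact: IHZ.
      + move=> hl ->; rewrite VR Hc //.
  have Vall : forall h' : 'I_E, (h' < h.+1)%N -> V h' = 0.
    move=> h'; rewrite ltnS leq_eqVlt => /orP[/eqP hh'|]; last exact: IHV.
    by have -> : h' = hh by apply/val_inj.
  split=> // j jF Lj.
  have cj : c j = 0.
    apply: (mds_zero (A := (@lshift r E @: ~: L j) :|: (@rshift r E @: [set h' : 'I_E | (h' < h.+1)%N]))) => //.
    - exact: Hcol.2.
    - rewrite card_shiftU card_lt_ord //.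
      have := cardsC (L j); rewrite card_ord; lia.
    - move=> x; rewrite inE => /orP[/imsetP[i]|/imsetP[h']]; rewrite inE => Hx ->.
      + by rewrite cE Z0.
      + by rewrite -VL Vall // mxE.
  by move=> i; rewrite -cE cj mxE.
have [_ HZ] := key E (leqnn _).
have HL : forall j, j \notin Fs -> (#|L j| <= E)%N.
  move=> j jF; rewrite leqNgt; apply/negP => Ej.
  have := Hcnt E.
  have -> : [set l : 'I_m' | (E < e l)%N] = set0.
    by apply/setP=> l; rewrite !inE ltnNge Hemax.
  rewrite cards0 leqn0 cards_eq0 => /eqP/setP/(_ j); by rewrite !inE jF Ej.
apply/matrixP=> i j.
have ei : ext i = 0.
  apply: (mds_zero (G := Grow) (A := @lshift n m' @: ~: Fs)) => //.
  - exact: Hrow.2.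
  - exact: Hr.
  - rewrite card_imset; last exact: lshift_inj.
    have := cardsC Fs; rewrite card_ord => H; exact: (arith2 H HFs).
  - move=> x /imsetP[k]; rewrite inE => kF ->.
    by rewrite /ext row_mxEl mxE HZ // HL.
by have := congr1 (fun M : 'rV_(n+m') => M ord0 (lshift m' j)) ei; rewrite /ext row_mxEl !mxE.
Qed.
End Core.

End S_Core.
Import S_Core.

Module S_M1.
Set Implicit Arguments. Unset Strict Implicit. Unset Printing Implicit Defensive.
Local Open Scope ring_scope.

Lemma card_count (T : finType) (P : pred T) : #|[set x | P x]| = count P (enum T).
Proof. rewrite cardE [in LHS]/enum_mem size_filter enumT. have E : forall x, (x \in [set x | P x]) = P x by move=> x; rewrite inE. by rewrite -(eq_count E). Qed.

Lemma condb n r m' (e : nat -> nat) (Fs : {set 'I_n}) (L : 'I_n -> {set 'I_r}) :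
  (forall a b, (a <= b)%N -> (b < m')%N -> (e a <= e b)%N) ->
  (size (fail_sizes Fs L) <= m')%N ->
  (forall i : nat, (i < size (fail_sizes Fs L))%N ->
     (nth 0%N (fail_sizes Fs L) (size (fail_sizes Fs L) - 1 - i) <= e (m' - 1 - i))%N) ->
  forall h : nat, (#|[set j | (j \notin Fs) && (h < #|L j|)%N]| <= #|[set l : 'I_m' | (h < e l)%N]|)%N.
Proof.
move=> Hmono Ht Hf h.
set f := fail_sizes Fs L in Ht Hf *.
have -> : #|[set j | (j \notin Fs) && (h < #|L j|)%N]| = count (fun x => h < x)%N f.
  rewrite card_count /f /fail_sizes count_sort count_map [in RHS]count_filter.
  apply: eq_count => j /=; rewrite /preim /=.
  case: (ltnP h #|L j|) => hL; last by rewrite andbF.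
  have : (0 < #|L j|)%N by lia.
  by rewrite card_gt0 => ->; rewrite !andbT.
set c := count _ f.
have cs : (c <= size f)%N by apply: count_size.
case: (posnP c) => [->//|cpos].
have Hs : sorted leq f by apply: sort_sorted; exact: leq_total.
have := sorted_count_nth Hs cpos; rewrite -/c => hn.
have := Hf c.-1 ltac:(lia).
have -> : (size f - 1 - c.-1 = size f - c)%N by lia.
have -> : (m' - 1 - c.-1 = m' - c)%N by lia.
move=> Hle.
have hem : (h < e (m' - c))%N by lia.
apply: (@leq_trans #|[set l : 'I_m' | (m' - c <= l)%N]|).
  rewrite card_ge_ord; lia.
apply: subset_leq_card; apply/subsetP => l; rewrite !inE => Hl.
apply: (leq_trans hem); apply: Hmono => //.
Qed.

End S_M1.
Import S_M1.

Module S_C.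
Set Implicit Arguments. Unset Strict Implicit. Unset Printing Implicit Defensive.

Lemma card_Q (r m' : nat) (e : nat -> nat) : (forall l : 'I_m', e l <= r) ->
  #|[set li : 'I_m' * 'I_r | r - e li.1 <= li.2]| = \sum_(l < m') e l.
Proof.
move=> Her.
rewrite -sum1_card.
have -> : \sum_(i in [set li : 'I_m' * 'I_r | r - e li.1 <= li.2]) 1 =
          \sum_(p : 'I_m' * 'I_r | true && (r - e p.1 <= p.2)) 1.
  by apply: eq_bigl => p; rewrite inE.
rewrite -(pair_big_dep xpredT (fun (l : 'I_m') (i : 'I_r) => r - e l <= i) (fun _ _ => 1)) /=.
apply: eq_bigr => l _.
transitivity #|[set i : 'I_r | r - e l <= i]|.
  by rewrite -sum1_card; apply: eq_bigl => i; rewrite inE.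
rewrite card_ge_ord; have := Her l; lia.
Qed.

Lemma card_data (n r m m' : nat) (e : nat -> nat) :
  m <= n -> m' <= n - m -> (forall l : 'I_m', e l <= r) ->
  #|[set p : 'I_r * 'I_n | data_pos n r m m' e p.1 p.2]| = r * (n - m) - \sum_(l < m') e l.
Proof.
move=> Hmn Hm'2 Her.
have jlt : forall l : 'I_m', n - m - m' + l < n by move=> l; have := ltn_ord l; lia.
set D0 := [set p : 'I_r * 'I_n | p.2 < n - m].
set St := [set p : 'I_r * 'I_n | stair_pos n r m m' e p.1 p.2].
have -> : [set p : 'I_r * 'I_n | data_pos n r m m' e p.1 p.2] = D0 :\: St.
  by apply/setP => p; rewrite !inE /data_pos ltn_ord /= andbC.
have StD : St \subset D0.
  apply/subsetP => p; rewrite !inE => /existsP [l /andP[/eqP -> _]].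
  have := ltn_ord l; lia.
rewrite cardsD (setIidPr StD).
have -> : #|D0| = r * (n - m).
  have -> : D0 = setX [set: 'I_r] [set j : 'I_n | j < n - m].
    by apply/setP => [[i j]]; rewrite !inE.
  by rewrite cardsX cardsT card_ord card_lt_ord // leq_subr.
have -> : St = (fun li : 'I_m' * 'I_r => (li.2, Ordinal (jlt li.1))) @:
               [set li : 'I_m' * 'I_r | r - e li.1 <= li.2].
  apply/setP => [[i j]]; rewrite !inE; apply/idP/imsetP.
    move=> /existsP [l /andP[/eqP jl /andP[il _]]].
    exists (l, i); first by rewrite inE.
    by congr (_, _); apply/val_inj.
  move=> [[l i'] ]; rewrite inE /= => il [-> ->].
  by apply/existsP; exists l; rewrite /= eqxx il ltn_ord.
rewrite card_imset; first by rewrite card_Q.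
move=> [l1 i1] [l2 i2] /= [-> h].
by congr (_, _); apply/val_inj => /=; lia.
Qed.

End S_C.
Import S_C.

Module S_M2.
Set Implicit Arguments. Unset Strict Implicit. Unset Printing Implicit Defensive.
Local Open Scope ring_scope.

Section Main.
Variables (F : finFieldType) (n r m m' : nat) (e : nat -> nat).
Variables (Grow : 'M[F]_(n - m, n + m')) (Gcol : 'M[F]_(r, r + e m'.-1)).
Hypotheses (Hrow : sys_MDS_code Grow) (Hcol : sys_MDS_code Gcol).
Hypothesis (Hmn : (m <= n)%N) (Hm'2 : (m' <= n - m)%N) (Hm'1 : (1 <= m')%N).
Hypothesis (Hmono : forall a b, (a <= b)%N -> (b < m')%N -> (e a <= e b)%N).
Hypothesis (Her : (e m'.-1 <= r)%N).

Local Notation E := (e m'.-1).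

Lemma Hemax (l : 'I_m') : (e l <= E)%N.
Proof. apply: Hmono; have := ltn_ord l; lia. Qed.

Lemma core2 (X1 X2 : 'M[F]_(r,n)) (P1 P2 : 'M[F]_(r,m')) (Fs : {set 'I_n}) (L : 'I_n -> {set 'I_r}) :
 (forall i : 'I_r, codeword F (n-m) (n+m') Grow (row_mx (row i X1) (row i P1))) ->
 (forall i : 'I_r, codeword F (n-m) (n+m') Grow (row_mx (row i X2) (row i P2))) ->
 (forall (l : 'I_m') (h : 'I_E), (h < e l)%N ->
    ((col l P1)^T *m Gcol) 0 (rshift r h) = ((col l P2)^T *m Gcol) 0 (rshift r h)) ->
 (#|Fs| <= m)%N ->
 (forall h : nat, #|[set j | (j \notin Fs) && (h < #|L j|)%N]| <= #|[set l : 'I_m' | (h < e l)%N]|)%N ->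
 (forall i j, j \notin Fs -> i \notin L j -> X1 i j = X2 i j) ->
 X1 = X2.
Proof.
move=> R1 R2 C12 HFs Hcnt H12.
apply/eqP; rewrite -subr_eq0; apply/eqP.
apply: (core Hrow Hcol Hmn Hemax (P := P1 - P2) (Fs := Fs) (L := L)) => //.
- move=> i.
  have -> : row_mx (row i (X1 - X2)) (row i (P1 - P2)) =
            row_mx (row i X1) (row i P1) - row_mx (row i X2) (row i P2).
    by apply/matrixP => a b; rewrite !mxE; case: splitP => k _; rewrite !mxE.
  exact: cwB.
- move=> l h hl.
  have -> : (col l (P1 - P2))^T = (col l P1)^T - (col l P2)^T by apply/matrixP=> a b; rewrite !mxE.
  rewrite mulmxBl; have := C12 l h hl.
  set A := (col l P1)^T *m Gcol; set B := (col l P2)^T *m Gcol.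
  by rewrite !mxE => ->; rewrite subrr.
- by move=> i j jF iL; rewrite !mxE H12 // subrr.
Qed.

Definition Fa : {set 'I_n} := [set j : 'I_n | (n - m <= j)%N].
Definition La (j : 'I_n) : {set 'I_r} := [set i : 'I_r | stair_pos n r m m' e i j].

Lemma Fa_card : (#|Fa| <= m)%N.
Proof. rewrite /Fa card_ge_ord; lia. Qed.

Lemma jlt (l : 'I_m') : (n - m - m' + l < n)%N.
Proof. have := ltn_ord l; lia. Qed.

Lemma Fa_cond (h : nat) :
  (#|[set j | (j \notin Fa) && (h < #|La j|)%N]| <= #|[set l : 'I_m' | (h < e l)%N]|)%N.
Proof.
apply: (@leq_trans #|(fun l : 'I_m' => Ordinal (jlt l)) @: [set l : 'I_m' | (h < e l)%N]|);
  last exact: leq_imset_card.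
apply: subset_leq_card; apply/subsetP => j; rewrite !inE => /andP[jF hL].
have : (0 < #|La j|)%N by lia.
rewrite card_gt0 => /set0Pn [i]; rewrite inE => /existsP [l /andP[/eqP jl il]].
apply/imsetP; exists l; last by apply/val_inj.
rewrite inE; apply: (leq_trans hL).
apply: (@leq_trans #|[set i : 'I_r | (r - e l <= i)%N]|); last first.
  rewrite card_ge_ord; last lia. have := Hemax l; lia.
apply: subset_leq_card; apply/subsetP => i'; rewrite !inE => /existsP [l' /andP[/eqP jl' il']].
have -> : l = l' by apply/val_inj => /=; lia.
by case/andP: il'.
Qed.

Lemma Fa_zero (i : 'I_r) (j : 'I_n) : j \notin Fa -> i \notin La j -> data_pos n r m m' e i j.
Proof. by rewrite !inE /data_pos ltn_ord -ltnNge => -> ->. Qed.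


Local Notation N := (n - m)%N.

Definition XU (U : 'M[F]_(r, N)) : 'M[F]_(r, n) := lsubmx (U *m Grow).
Definition PU (U : 'M[F]_(r, N)) : 'M[F]_(r, m') := rsubmx (U *m Grow).

Lemma rowU U i : row_mx (row i (XU U)) (row i (PU U)) = row i U *m Grow.
Proof. by rewrite -row_row_mx hsubmxK row_mul. Qed.

Lemma XU_cw U i : codeword F (n-m) (n+m') Grow (row_mx (row i (XU U)) (row i (PU U))).
Proof. by rewrite rowU; exists (row i U). Qed.

Lemma XU_sys U (i : 'I_r) (j : 'I_n) (j' : 'I_N) : j = j' :> nat -> XU U i j = U i j'.
Proof.
move=> jj.
have -> : XU U i j = (row i U *m Grow) 0 (lshift m' j) by rewrite -rowU row_mxEl !mxE.
by rewrite (@sys_entry _ _ _ _ _ _ j' Hrow.1) ?mxE.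
Qed.

Definition cons U (l : 'I_m') (h : 'I_E) := ((col l (PU U))^T *m Gcol) 0 (rshift r h).

Definition consn U (l : 'I_m') (k : nat) :=
  \sum_(c : 'I_(r + E) | val c == (r + k)%N) ((col l (PU U))^T *m Gcol) 0 c.

Lemma consnE U l (h : 'I_E) : consn U l h = cons U l h.
Proof.
rewrite /consn (big_pred1 (rshift r h)) // => c /=.
Qed.

Definition spick (i j : nat) := [pick l : 'I_m' | (j == n - m - m' + l)%N && (r - e l <= i < r)%N].

Definition Psi (U : 'M[F]_(r, N)) : 'M[F]_(r, N) :=
  \matrix_(i, j) if spick i j is Some l then consn U l (i - (r - e l)) else U i j.

Lemma Psi_stair U (l : 'I_m') (h : 'I_E) (i : 'I_r) (j : 'I_N) :
  (h < e l)%N -> i = (r - e l + h)%N :> nat -> j = (n - m - m' + l)%N :> nat ->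
  Psi U i j = cons U l h.
Proof.
move=> hl ii jj; rewrite mxE /spick.
have el := Hemax l.
case: pickP => [l' /andP[/eqP jl' il']|H]; last first.
  have := H l; rewrite jj eqxx /= ii.
  have -> : (r - e l <= r - e l + h)%N by lia.
  have -> : (r - e l + h < r)%N by lia.
  by [].
have -> : l' = l by apply/val_inj => /=; lia.
have -> : (i - (r - e l) = h)%N by lia.
exact: consnE.
Qed.

Lemma Psi_data U (i : 'I_r) (j : 'I_N) : ~~ stair_pos n r m m' e i j -> Psi U i j = U i j.
Proof.
rewrite mxE /spick; case: pickP => // l Hl /existsP []; by exists l.
Qed.

Lemma jN (j : 'I_n) : j \notin Fa -> (j < N)%N.
Proof. by rewrite inE -ltnNge. Qed.

Lemma Psi_inj : injective Psi.
Proof.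
move=> U V HUV.
have HX : XU U = XU V.
  apply: (core2 (P1 := PU U) (P2 := PU V) (Fs := Fa) (L := La)).
  - exact: XU_cw.
  - exact: XU_cw.
  - move=> l h hl.
    have el := Hemax l.
    have i0 : (r - e l + h < r)%N by lia.
    have j0 : (n - m - m' + l < N)%N by have := ltn_ord l; lia.
    rewrite -/(cons U l h) -/(cons V l h).
    rewrite -(@Psi_stair U l h (Ordinal i0) (Ordinal j0)) //.
    by rewrite -(@Psi_stair V l h (Ordinal i0) (Ordinal j0)) // HUV.
  - exact: Fa_card.
  - exact: Fa_cond.
  - move=> i j jF iL.
    have jn := jN jF.
    have Hd := Fa_zero jF iL.
    have ns : ~~ stair_pos n r m m' e i j by move: Hd; rewrite /data_pos => /and3P[].
    rewrite (@XU_sys U i j (Ordinal jn)) // (@XU_sys V i j (Ordinal jn)) //.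
    by rewrite -(@Psi_data U i (Ordinal jn) ns) -(@Psi_data V i (Ordinal jn) ns) HUV.
apply/matrixP=> i j.
have jn : (j < n)%N by have := ltn_ord j; lia.
by rewrite -(@XU_sys U i (Ordinal jn) j) // -(@XU_sys V i (Ordinal jn) j) // HX.
Qed.


Lemma uniqS (X Y : 'M[F]_(r, n)) (Fs : {set 'I_n}) (L : 'I_n -> {set 'I_r}) :
  in_STAIR F n r m m' e Grow Gcol X -> in_STAIR F n r m m' e Grow Gcol Y ->
  (#|Fs| <= m)%N ->
  (forall h : nat, #|[set j | (j \notin Fs) && (h < #|L j|)%N]| <= #|[set l : 'I_m' | (h < e l)%N]|)%N ->
  (forall i j, j \notin Fs -> i \notin L j -> X i j = Y i j) -> X = Y.
Proof.
move=> [P1 [R1 C1]] [P2 [R2 C2]] HFs Hc H.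
apply: (core2 (P1 := P1) (P2 := P2) (Fs := Fs) (L := L)) => //.
by move=> l h hl; rewrite C1 // C2.
Qed.

Lemma partA (d : 'M[F]_(r, n)) :
  exists! X : 'M[F]_(r, n),
    in_STAIR F n r m m' e Grow Gcol X /\
    (forall (i : 'I_r) (j : 'I_n), data_pos n r m m' e i j -> X i j = d i j).
Proof.
have [g K1 K2] := injF_bij Psi_inj.
pose T : 'M[F]_(r, N) := \matrix_(i, j) if stair_pos n r m m' e i j then 0 else d i (widen_ord (leq_subr m n) j).
have PT : Psi (g T) = T by apply: K2.
set U := g T in PT.
have SX : in_STAIR F n r m m' e Grow Gcol (XU U).
  exists (PU U); split; first exact: XU_cw.
  move=> l h hl.
  have el := Hemax l.
  have i0 : (r - e l + h < r)%N by lia.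
  have j0 : (n - m - m' + l < N)%N by have := ltn_ord l; lia.
  rewrite -/(cons U l h) -(@Psi_stair U l h (Ordinal i0) (Ordinal j0)) // PT mxE.
  have -> : stair_pos n r m m' e (Ordinal i0) (Ordinal j0).
    apply/existsP; exists l => /=; rewrite eqxx /=; apply/andP; split; lia.
  by [].
exists (XU U); split.
  split=> // i j Hd.
  move: (Hd); rewrite /data_pos => /and3P[_ jn ns].
  rewrite (@XU_sys U i j (Ordinal jn)) // -(@Psi_data U i (Ordinal jn) ns) PT mxE.
  rewrite (negbTE ns); congr (d _ _); exact/val_inj.
move=> Y [SY HY].
apply: (uniqS SX SY Fa_card Fa_cond) => i j jF iL.
have Hd := Fa_zero jF iL.
rewrite HY //.
move: (Hd); rewrite /data_pos => /and3P[_ jn ns].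
rewrite (@XU_sys U i j (Ordinal jn)) // -(@Psi_data U i (Ordinal jn) ns) PT mxE.
rewrite (negbTE ns); congr (d _ _); exact/val_inj.
Qed.

End Main.

End S_M2.
Import S_M2.

Unset Implicit Arguments.
Local Open Scope ring_scope.

Lemma mono_ext (m' : nat) (e : nat -> nat) :
  (forall l : nat, (l.+1 < m')%N -> (e l <= e l.+1)%N) ->
  forall a b, (a <= b)%N -> (b < m')%N -> (e a <= e b)%N.
Proof.
move=> H a; elim=> [|b IH] ab bm.
  by move: ab; rewrite leqn0 => /eqP ->.
case: (ltnP b a) => ba.
  by have -> : a = b.+1 by lia.
apply: (leq_trans (IH ba (ltnW bm))); exact: H.
Qed.

Theorem mainTheorem3
  (F : finFieldType) (w n r m m' : nat) (e : nat -> nat)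
  (HF : #|F| = (2 ^ w)%N)
  (Hm1 : (1 <= m)%N) (Hmn : (m < n)%N)
  (Hm'1 : (1 <= m')%N) (Hm'2 : (m' <= n - m)%N)
  (He0 : (0 < e 0)%N)
  (Hemono : forall l : nat, (l.+1 < m')%N -> (e l <= e l.+1)%N)
  (Her : (e m'.-1 <= r)%N)
  (Hw1 : (n + m' <= 2 ^ w)%N) (Hw2 : (r + e m'.-1 <= 2 ^ w)%N)
  (Grow : 'M[F]_(n - m, n + m')) (Gcol : 'M[F]_(r, r + e m'.-1))
  (Hrow : sys_MDS_code Grow) (Hcol : sys_MDS_code Gcol) :
  let s := (\sum_(l < m') e l)%N in
  (* (a) *)
  (#|[set p : 'I_r * 'I_n | data_pos n r m m' e p.1 p.2]| = r * (n - m) - s)%N /\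
  (forall d : 'M[F]_(r, n),
     exists! X : 'M[F]_(r, n),
       in_STAIR F n r m m' e Grow Gcol X /\
       (forall (i : 'I_r) (j : 'I_n), data_pos n r m m' e i j -> X i j = d i j)) /\
  (* (b) *)
  (forall (Fs : {set 'I_n}) (L : 'I_n -> {set 'I_r}),
     (#|Fs| <= m)%N ->
     let f := fail_sizes Fs L in
     let t := size f in
     (t <= m')%N ->
     (forall i : nat, (i < t)%N -> (nth 0%N f (t - 1 - i) <= e (m' - 1 - i))%N) ->
     forall X Y : 'M[F]_(r, n),
       in_STAIR F n r m m' e Grow Gcol X -> in_STAIR F n r m m' e Grow Gcol Y ->
       (forall (i : 'I_r) (j : 'I_n), j \notin Fs -> i \notin L j -> X i j = Y i j) ->
       X = Y).
Proof.
move=> s.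
have Hmono := @mono_ext m' e Hemono.
have Hmn' : (m <= n)%N by apply: ltnW.
have Hel : forall l : 'I_m', (e l <= r)%N.
  move=> l; apply: leq_trans Her; apply: Hmono => //; have := ltn_ord l; lia.
split; first exact: card_data.
split.
  move=> d; exact: (partA Hrow Hcol Hmn' Hm'2 Hm'1 Hmono Her d).
move=> Fs L HFs f t Ht Hf X Y SX SY HXY.
exact: (uniqS Hrow Hcol Hmn' Hm'2 Hm'1 Hmono Her SX SY HFs (condb Hmono Ht Hf) HXY).
Qed.
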